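(* Let $n=2K$, let $m_1,\dots,m_n>0$ be fixed constants, and let $M=\{(x_1,\dots,x_n)\in\mathbb{R}^n: x_1<\dots<x_n\}$ carry the Poisson bracket determined by $\{x_i,x_k\}=\operatorname{sgn}(x_i-x_k)$, i.e. $\{f,g\}=\sum_{i,k}\operatorname{sgn}(x_i-x_k)\frac{\partial f}{\partial x_i}\frac{\partial g}{\partial x_k}$. Set $h_i=m_ie^{x_i}$, $g_i=m_ie^{-x_i}$ and $$H_j=\sum_{\substack{I,J\in\binom{[2K]}{j}\\ I<J}} h_I g_J,\qquad 1\le j\le K.$$ Then $\{H_i,H_j\}=0$ for all $1\le i,j\le K$.
   Context: $[k]=\{1,\dots,k\}$ and $\binom{[k]}{j}$ is the set of $j$-element subsets $I=\{i_1<\dots<i_j\}$ of $[k]$. For $I,J\in\binom{[k]}{j}$, $I<J$ (interlacing) means $i_1<j_1<i_2<j_2<\dots<i_j<j_j$. Also $h_I=h_{i_1}\cdots h_{i_j}$ and $g_J=g_{j_1}\cdots g_{j_j}$. (These $H_j$ are constants of motion of the conservative mCH peakon system $\dot x_j=2\sum_{k\ne j}m_jm_ke^{-|x_j-x_k|}+4\sum_{1\le i<j<k\le n}m_im_ke^{-|x_i-x_k|}$ on $M$.) *)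

(* Defs.v *)
From HB Require Import structures.
From mathcomp Require Import all_boot all_order all_algebra.
From mathcomp Require Import all_classical all_reals all_analysis.
Set Implicit Arguments. Unset Strict Implicit. Unset Printing Implicit Defensive.
Import Order.TTheory GRing.Theory Num.Theory.
Import numFieldNormedType.Exports.
Local Open Scope ring_scope.

Definition sorted_elts (n : nat) (I : {set 'I_n}) : seq nat :=
  sort leq [seq val i | i in I].

(* Interlacing I < J : i_1 < j_1 < i_2 < j_2 < ... < i_j < j_j
   (for sets of the same cardinality). *)
Definition interlace (n : nat) (I J : {set 'I_n}) : bool :=
  let s := sorted_elts I in
  let t := sorted_elts J in
  [&& size s == size t,
      all (fun r => nth 0%N s r < nth 0%N t r)%N (iota 0 (size s))
    & all (fun r => nth 0%N t r < nth 0%N s r.+1)%N (iota 0 (size s).-1)].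

Definition partial (R : realType) (n : nat) (i : 'I_n)
    (f : ('I_n -> R) -> R) (x : 'I_n -> R) : R :=
  derive1 (fun t : R => f (fun k => if k == i then t else x k)) (x i).

Definition pbracket (R : realType) (n : nat)
    (f g : ('I_n -> R) -> R) (x : 'I_n -> R) : R :=
  \sum_(i < n) \sum_(k < n)
    Num.sg (x i - x k) * partial i f x * partial k g x.

Definition Hj (R : realType) (n : nat) (m : 'I_n -> R) (j : nat)
    (x : 'I_n -> R) : R :=
  \sum_(I : {set 'I_n} | #|I| == j)
    \sum_(J : {set 'I_n} | (#|J| == j) && interlace I J)
      (\prod_(i in I) (m i * expR (x i))) *
      (\prod_(k in J) (m k * expR (- x k))).

(* Main.v *)
Require Import Defs.
From HB Require Import structures.
From mathcomp Require Import all_boot all_order all_algebra.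
From mathcomp Require Import ring zify.
Import Order.TTheory GRing.Theory Num.Theory.
Set Implicit Arguments. Unset Strict Implicit. Unset Printing Implicit Defensive.

Section Lists.
Variable n : nat.
Implicit Types S U I J : {set 'I_n}.

Definition rk S (u : 'I_n) : nat := #|[set v in S | (v < u)%N]|.
Definition ev U : {set 'I_n} := [set u in U | ~~ odd (rk U u)].
Definition od U : {set 'I_n} := [set u in U | odd (rk U u)].

Lemma card_count S (P : pred 'I_n) : #|[set v in S | P v]| = count P (enum S).
Proof.
rewrite cardE -size_filter; apply: perm_size; apply: uniq_perm.
- exact: enum_uniq.
- exact/filter_uniq/enum_uniq.
by move=> v; rewrite mem_enum mem_filter mem_enum !inE andbC.
Qed.

Lemma se_sorted S : sorted ltn (sorted_elts S).
Proof.
rewrite ltn_sorted_uniq_leq sort_uniq sort_sorted ?andbT; last exact: leq_total.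
by rewrite map_inj_uniq ?enum_uniq //; exact: val_inj.
Qed.

Lemma se_uniq S : uniq (sorted_elts S).
Proof. by have := se_sorted S; rewrite ltn_sorted_uniq_leq => /andP[]. Qed.

Lemma se_size S : size (sorted_elts S) = #|S|.
Proof. by rewrite /sorted_elts size_sort size_map cardE. Qed.

Lemma se_mem S (i : 'I_n) : (val i \in sorted_elts S) = (i \in S).
Proof. by rewrite /sorted_elts mem_sort (mem_map val_inj) mem_enum. Qed.

Lemma se_lt S k : k \in sorted_elts S -> (k < n)%N.
Proof. by rewrite /sorted_elts mem_sort => /mapP[i _ ->]; exact: ltn_ord. Qed.

Lemma se_count S (P : pred nat) : count P (sorted_elts S) = #|[set v in S | P (val v)]|.
Proof.
rewrite card_count /sorted_elts.
have /permP -> : perm_eq (sort leq [seq val i | i in S]) [seq val i | i in S].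
  by rewrite perm_sort.
by rewrite count_map.
Qed.

Lemma CNT (s : seq nat) (P : pred nat) r : (r <= size s)%N ->
  (forall k, (k < size s)%N -> P (nth 0 s k) = (k < r)%N) -> count P s = r.
Proof.
elim: s r => [|x s IH] [|r] //= hr H.
- rewrite (H 0%N) //= add0n; have := IH 0%N (leq0n _).
  by apply=> k hk; exact: (H k.+1).
- rewrite (H 0%N) //= add1n; congr _.+1; apply: IH => // k hk; exact: (H k.+1).
Qed.

Lemma SLT (s : seq nat) i j : sorted ltn s -> (i < size s)%N -> (j < size s)%N ->
  (nth 0 s i < nth 0 s j)%N = (i < j)%N.
Proof.
move=> ss hi hj; case: (ltngtP i j) => [ij|ji|->].
- exact: (sorted_ltn_nth ltn_trans).
- apply/negbTE; rewrite -leqNgt ltnW //; exact: (sorted_ltn_nth ltn_trans).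
- by rewrite ltnn.
Qed.

Lemma SLE (s : seq nat) i j : sorted ltn s -> (i < size s)%N -> (j < size s)%N ->
  (nth 0 s i <= nth 0 s j)%N = (i <= j)%N.
Proof. by move=> ss hi hj; rewrite leqNgt SLT // -leqNgt. Qed.

Lemma rk_lt S u : u \in S -> (rk S u < #|S|)%N.
Proof.
move=> uS; rewrite /rk card_count cardE.
rewrite -(count_predC [pred v : 'I_n | (v < u)%N]) -addn1 leq_add2l.
by rewrite -has_count; apply/hasP; exists u; rewrite ?mem_enum //= ltnn.
Qed.

Lemma rk_count S u : rk S u = count (fun k => k < val u)%N (sorted_elts S).
Proof. by rewrite se_count. Qed.

Lemma RANK S u : u \in S -> nth 0 (sorted_elts S) (rk S u) = val u.
Proof.
move=> uS; set s := sorted_elts S.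
have us : val u \in s by rewrite se_mem.
have ss := se_sorted S.
rewrite rk_count -/s; set r := index (val u) s.
have hr : (r < size s)%N by rewrite index_mem.
have eu : nth 0 s r = val u by rewrite nth_index.
rewrite (@CNT s _ r) ?eu //; first exact: ltnW.
by move=> k hk; rewrite -eu SLT.
Qed.

Lemma SE (l : seq nat) S : sorted ltn l -> all (fun k => k < n)%N l ->
  (forall i : 'I_n, (val i \in l) = (i \in S)) -> sorted_elts S = l.
Proof.
move=> sl al ml.
have ul : uniq l by move: sl; rewrite ltn_sorted_uniq_leq => /andP[].
have sl' : sorted leq l by move: sl; rewrite ltn_sorted_uniq_leq => /andP[].
rewrite /sorted_elts -[RHS](sorted_sort leq_trans sl').
apply/perm_sortP; [exact: leq_total | exact: leq_trans | exact: anti_leq |].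
apply: uniq_perm => //; first by rewrite map_inj_uniq ?enum_uniq //; exact: val_inj.
move=> k; apply/idP/idP.
  by move=> /mapP[i iS ->]; rewrite ml -mem_enum.
move=> kl; have kn : (k < n)%N := allP al k kl.
apply/mapP; exists (Ordinal kn) => //; by rewrite mem_enum -ml.
Qed.

Lemma rank_eq U (i : 'I_n) k : (k < #|U|)%N ->
  (val i == nth 0 (sorted_elts U) k) = (i \in U) && (rk U i == k).
Proof.
move=> hk; apply/eqP/andP => [ei|[iU /eqP <-]]; last by rewrite RANK.
have iU : i \in U by rewrite -se_mem ei mem_nth // se_size.
split=> //; apply/eqP; have := RANK iU; rewrite ei => /eqP.
by rewrite nth_uniq ?se_uniq ?se_size ?rk_lt // => /eqP.
Qed.

Lemma K1 U j : #|U| = (2 * j)%N ->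
  [/\ #|ev U| = j, #|od U| = j & interlace (ev U) (od U)].
Proof.
move=> cU; set s := sorted_elts U.
have ss : sorted ltn s := se_sorted U.
have szs : size s = (2 * j)%N by rewrite /s se_size.
set se' := [seq nth 0 s (2 * r) | r <- iota 0 j].
set to' := [seq nth 0 s (2 * r).+1 | r <- iota 0 j].
have nse : forall r, (r < j)%N -> nth 0 se' r = nth 0 s (2 * r).
  by move=> r hr; rewrite (nth_map 0) ?size_iota // nth_iota.
have nto : forall r, (r < j)%N -> nth 0 to' r = nth 0 s (2 * r).+1.
  by move=> r hr; rewrite (nth_map 0) ?size_iota // nth_iota.
have Eev : sorted_elts (ev U) = se'.
  apply: SE.
  - apply/(sortedP 0) => r; rewrite size_map size_iota => hr.
    rewrite nse ?nse; try lia.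
    rewrite /= SLT // ?szs; lia.
  - apply/allP => k /mapP[r]; rewrite mem_iota => /andP[_ hr] ->.
    apply: (@se_lt U); apply: mem_nth; rewrite -/s szs; lia.
  - move=> i; rewrite inE; apply/mapP/andP => [[r]|[iU ei]].
      rewrite mem_iota => /andP[_ hr] ei.
      have h : (2 * r < #|U|)%N by rewrite cU; lia.
      move: (rank_eq i h); rewrite -/s -ei eqxx => /esym/andP[iU /eqP rki].
      by rewrite iU rki oddM.
    have hk := rk_lt iU; rewrite cU in hk.
    exists (rk U i)./2; first by rewrite mem_iota; lia.
    apply/eqP; rewrite rank_eq ?cU; last by lia.
    by rewrite iU /= mul2n halfK (negbTE ei) subn0.
have Eod : sorted_elts (od U) = to'.
  apply: SE.
  - apply/(sortedP 0) => r; rewrite size_map size_iota => hr.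
    rewrite nto ?nto; try lia.
    rewrite /= SLT // ?szs; lia.
  - apply/allP => k /mapP[r]; rewrite mem_iota => /andP[_ hr] ->.
    apply: (@se_lt U); apply: mem_nth; rewrite -/s szs; lia.
  - move=> i; rewrite inE; apply/mapP/andP => [[r]|[iU ei]].
      rewrite mem_iota => /andP[_ hr] ei.
      have h : ((2 * r).+1 < #|U|)%N by rewrite cU; lia.
      move: (rank_eq i h); rewrite -/s -ei eqxx => /esym/andP[iU /eqP rki].
      by rewrite iU rki /= oddM.
    have hk := rk_lt iU; rewrite cU in hk.
    exists (rk U i)./2; first by rewrite mem_iota; lia.
    apply/eqP; rewrite rank_eq ?cU; last by lia.
    by rewrite iU /= mul2n halfK ei subn1 prednK // lt0n; apply: contraTneq ei => ->.
have cev : #|ev U| = j by rewrite -se_size Eev size_map size_iota.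
have cod : #|od U| = j by rewrite -se_size Eod size_map size_iota.
split=> //; rewrite /interlace Eev Eod !size_map size_iota eqxx /=.
apply/andP; split; apply/allP => r; rewrite mem_iota => /andP[_ hr].
  rewrite nse // nto // SLT ?szs //; lia.
rewrite nto ?nse; try lia.
rewrite SLT ?szs //; lia.
Qed.

Lemma K2 I J j : #|I| = j -> #|J| = j -> interlace I J ->
  ev (I :|: J) = I /\ od (I :|: J) = J.
Proof.
move=> cI cJ; rewrite /interlace /=; set s := sorted_elts I; set t := sorted_elts J.
have zs : size s = j by rewrite /s se_size.
have zt : size t = j by rewrite /t se_size.
have ss : sorted ltn s := se_sorted I.
have st : sorted ltn t := se_sorted J.
rewrite zs => /and3P[_ /allP A /allP B].
have C1 : forall k r, (k < r)%N -> (r < j)%N -> (nth 0 t k < nth 0 s r)%N.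
  move=> k r kr rj; apply: (@leq_trans (nth 0 s k.+1)).
    by apply: B; rewrite mem_iota; lia.
  rewrite SLE ?zs //; lia.
have C2 : forall r k, (r <= k)%N -> (k < j)%N -> (nth 0 s r < nth 0 t k)%N.
  move=> r k hrk kj; apply: (@leq_ltn_trans (nth 0 s k)).
    by rewrite SLE ?zs //; lia.
  by apply: A; rewrite mem_iota; lia.
have P1 : forall r k, (r < j)%N -> (k < j)%N -> (nth 0 t k < nth 0 s r)%N = (k < r)%N.
  move=> r k rj kj; case: (ltnP k r) => kr; first exact: C1.
  by apply/negbTE; rewrite -leqNgt ltnW // C2.
have P2 : forall r k, (r < j)%N -> (k < j)%N -> (nth 0 s k < nth 0 t r)%N = (k <= r)%N.
  move=> r k rj kj; case: (leqP k r) => kr; first exact: C2.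
  by apply/negbTE; rewrite -leqNgt ltnW // C1.
have rJ : forall u, u \in I -> rk J u = rk I u.
  move=> u uI; have hr := rk_lt uI; rewrite cI in hr.
  rewrite rk_count -/t -(RANK uI) -/s.
  by apply: CNT; rewrite ?zt; [lia| move=> k hk; rewrite P1].
have rI : forall u, u \in J -> rk I u = (rk J u).+1.
  move=> u uJ; have hr := rk_lt uJ; rewrite cJ in hr.
  rewrite rk_count -/s -(RANK uJ) -/t.
  by apply: CNT; rewrite ?zs; [lia| move=> k hk; rewrite P2].
have dIJ : I :&: J = set0.
  apply/setP => u; rewrite !inE; apply/negP => /andP[uI uJ].
  have := rJ u uI; rewrite (rI u uJ); lia.
have rkU : forall u, rk (I :|: J) u = (rk I u + rk J u)%N.
  move=> u; rewrite /rk.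
  have -> : [set v in I :|: J | (v < u)%N] =
      [set v in I | (v < u)%N] :|: [set v in J | (v < u)%N].
    by apply/setP => v; rewrite !inE andb_orl.
  rewrite cardsU; suff -> : [set v in I | (v < u)%N] :&: [set v in J | (v < u)%N] = set0.
    by rewrite cards0 subn0.
  apply/setP => v; rewrite !inE; apply/negP => /andP[/andP[vI _] /andP[vJ _]].
  have : v \in I :&: J by rewrite inE vI vJ.
  by rewrite dIJ inE.
split; apply/setP => u; rewrite !inE rkU.
  case: (boolP (u \in I)) => uI /=.
    by rewrite (rJ u uI) addnn odd_double.
  case: (boolP (u \in J)) => uJ //=.
  by rewrite (rI u uJ) addSn /= addnn odd_double.
case: (boolP (u \in I)) => uI /=.
  rewrite (rJ u uI) addnn odd_double /=.
  apply/esym/negP => uJ; have := rJ u uI; rewrite (rI u uJ); lia.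
case: (boolP (u \in J)) => uJ //=.
by rewrite (rI u uJ) addSn /= addnn odd_double.
Qed.

End Lists.


Local Open Scope ring_scope.

Section Core.
Variable R : comNzRingType.
Variable n : nat.
Variables hh gg : 'I_n -> R.
Implicit Types U V : {set 'I_n}.

Definition eps (U : {set 'I_n}) (i : 'I_n) : R := if i \in U then (-1) ^+ rk U i else 0.
Definition wt (U : {set 'I_n}) : R := \prod_(u in U) (if odd (rk U u) then gg u else hh u).
Definition sgo (i k : 'I_n) : R := if (i < k)%N then -1 else if (k < i)%N then 1 else 0.
Definition om (U V : {set 'I_n}) : R := \sum_i \sum_k sgo i k * eps U i * eps V k.
Definition low (N : nat) : {set 'I_n} := [set i : 'I_n | (i < N)%N].
Definition Y (N : nat) (p : int) : R :=
  \sum_(U : {set 'I_n} | (U \subset low N) && (#|U|%:Z == p)) wt U.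
Definition F (N : nat) (p q : int) : R :=
  \sum_(U : {set 'I_n} | (U \subset low N) && (#|U|%:Z == p))
   \sum_(V : {set 'I_n} | (V \subset low N) && (#|V|%:Z == q)) wt U * wt V * om U V.
Definition podd (k : int) : bool := odd `|k|%N.

Lemma podd_sub1 (k : int) : podd (k - 1) = ~~ podd k.
Proof.
rewrite /podd; case: k => [[|k]|k] //.
- have -> : (k.+1%:Z - 1 = k%:Z) by lia.
  by rewrite /= negbK.
- have -> : (Negz k - 1 = Negz k.+1) by lia.
  by [].
Qed.

Lemma sum_split (o : 'I_n) (Q : pred {set 'I_n}) (G : {set 'I_n} -> R) :
  \sum_(U : {set 'I_n} | (U \subset low o.+1) && Q U) G U =
  \sum_(U : {set 'I_n} | (U \subset low o) && Q U) G U +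
  \sum_(U : {set 'I_n} | (U \subset low o) && Q (o |: U)) G (o |: U).
Proof.
rewrite (bigID (fun U : {set 'I_n} => o \in U)) /= addrC; congr (_ + _).
  apply: eq_bigl => U; apply/idP/idP.
    case/andP=> /andP[sU qU] oU; rewrite qU andbT.
    apply/subsetP => i iU; have := subsetP sU i iU; rewrite !inE ltnS leq_eqVlt.
    by case/orP=> // /eqP/val_inj ei; rewrite -ei iU in oU.
  case/andP=> sU ->; rewrite andbT; apply/andP; split.
    apply: subset_trans sU _; apply/subsetP=> i; rewrite !inE; exact: ltnW.
  by apply/negP=> /(subsetP sU); rewrite inE ltnn.
rewrite (reindex_onto (fun U => o |: U) (fun U => U :\ o)) /=; last first.
  by move=> U /andP[_ oU]; rewrite setD1K.
apply: eq_bigl => U; rewrite setU11 andbT.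
apply/idP/idP.
  case/andP=> /andP[sU qU] /eqP eU; rewrite qU andbT.
  apply/subsetP => i iU.
  have : i \in o |: U by rewrite inE iU orbT.
  have oU : o \notin U by rewrite -eU setD11.
  move/(subsetP sU); rewrite !inE ltnS leq_eqVlt; case/orP=> // /eqP/val_inj ei.
  by rewrite -ei iU in oU.
case/andP=> sU ->; rewrite andbT.
have oU : o \notin U by apply/negP=> /(subsetP sU); rewrite inE ltnn.
rewrite setU1K // eqxx andbT.
apply/subsetP=> i; rewrite !inE; case/orP=> [/eqP -> //|/(subsetP sU)].
by rewrite inE => /ltnW.
Qed.


Lemma notin_low (o : 'I_n) U : U \subset low o -> o \notin U.
Proof. by move=> sU; apply/negP=> /(subsetP sU); rewrite inE ltnn. Qed.

Lemma rk_add_old (o : 'I_n) U u : U \subset low o -> u \in U -> rk (o |: U) u = rk U u.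
Proof.
move=> sU uU; rewrite /rk; apply: eq_card => v; rewrite !inE.
case: (v =P o) => [->|] //=.
have := subsetP sU u uU; rewrite inE => uo.
by rewrite ltnNge (ltnW uo) andbF.
Qed.

Lemma rk_add_new (o : 'I_n) U : U \subset low o -> rk (o |: U) o = #|U|.
Proof.
move=> sU; rewrite /rk; apply: eq_card => v; rewrite !inE.
case: (v =P o) => [->|_] /=; first by rewrite ltnn ?andbF ?orbT (negbTE (notin_low sU)).
case: (boolP (v \in U)) => //= vU.
by have := subsetP sU v vU; rewrite inE.
Qed.

Lemma eps_add (o : 'I_n) U i : U \subset low o ->
  eps (o |: U) i = eps U i + (i == o)%:R * (-1) ^+ #|U|.
Proof.
move=> sU; rewrite /eps !inE.
case: (i =P o) => [->|/eqP io] /=.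
  by rewrite (negbTE (notin_low sU)) rk_add_new // add0r mul1r.
rewrite mul0r addr0; case: ifP => // iU; by rewrite rk_add_old.
Qed.

Lemma eps_notin U i : i \notin U -> eps U i = 0.
Proof. by rewrite /eps => /negbTE ->. Qed.

Lemma wt_add (o : 'I_n) U : U \subset low o ->
  wt (o |: U) = (if odd #|U| then gg o else hh o) * wt U.
Proof.
move=> sU; rewrite /wt big_setU1 ?notin_low //= rk_add_new //; congr (_ * _).
by apply: eq_bigr => u uU; rewrite rk_add_old.
Qed.

Lemma low_ind (P : {set 'I_n} -> Prop) :
  P set0 -> (forall (o : 'I_n) U, U \subset low o -> P U -> P (o |: U)) ->
  forall U, P U.
Proof.
move=> P0 PS.
suff H : forall N U, U \subset low N -> P U.
  move=> U; apply: (H n); apply/subsetP=> i _; rewrite inE; exact: ltn_ord.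
elim=> [|N IH] U sU.
  suff -> : U = set0 by [].
  by apply/setP=> i; rewrite inE; apply/negP=> /(subsetP sU); rewrite inE.
case: (boolP [exists o in U, val o == N]) => [/existsP[o /andP[oU /eqP oN]]|].
  rewrite -(setD1K oU); apply: PS; last apply: IH.
    apply/subsetP=> i; rewrite !inE => /andP[io iU].
    have := subsetP sU i iU; rewrite inE ltnS leq_eqVlt oN; case/orP=> // /eqP ei.
    by move: io; rewrite (_ : i = o) ?eqxx //; apply: val_inj; rewrite /= ei.
  apply/subsetP=> i; rewrite !inE => /andP[io iU].
  have := subsetP sU i iU; rewrite inE ltnS leq_eqVlt -oN; case/orP=> // /eqP ei.
  by move: io; rewrite (_ : i = o) ?eqxx //; apply: val_inj.
move/existsPn=> H; apply: IH; apply/subsetP=> i iU.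
have := subsetP sU i iU; rewrite !inE ltnS leq_eqVlt; case/orP=> // /eqP ei.
by have := H i; rewrite iU (_ : \val i == N) //; apply/eqP.
Qed.

Definition sig (U : {set 'I_n}) : R := \sum_i eps U i.

Lemma sig_add (o : 'I_n) U : U \subset low o -> sig (o |: U) = sig U + (-1) ^+ #|U|.
Proof.
move=> sU; rewrite /sig.
under eq_bigr do rewrite eps_add //.
rewrite big_split /=; congr (_ + _).
rewrite (bigD1 o) //= eqxx mul1r big1 ?addr0 // => i /negbTE ->; by rewrite mul0r.
Qed.

Lemma sig_odd U : sig U = (odd #|U|)%:R.
Proof.
elim/low_ind: U => [|o U sU IH]; first by rewrite /sig big1 ?cards0 // => i _; rewrite eps_notin ?inE.
rewrite sig_add // IH cardsU1 notin_low //=.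
rewrite add0n -signr_odd.
by case: (odd #|U|); rewrite /= ?expr0 ?expr1 ?addr0 ?add0r ?subrr.
Qed.

Lemma om_addl (o : 'I_n) U V : U \subset low o ->
  om (o |: U) V = om U V + (-1) ^+ #|U| * \sum_k sgo o k * eps V k.
Proof.
move=> sU; rewrite /om.
transitivity (\sum_i \sum_k (sgo i k * eps U i * eps V k +
     (i == o)%:R * ((-1) ^+ #|U| * (sgo o k * eps V k)))).
  apply: eq_bigr => i _; apply: eq_bigr => k _; rewrite eps_add //.
  by case: (i =P o) => [->|_] /=; ring.
under eq_bigr => i _ do rewrite big_split /=.
rewrite big_split /=; congr (_ + _).
rewrite (bigD1 o) //= [X in _ + X]big1 ?addr0.
  by rewrite big_distrr /=; apply: eq_bigr => k _; rewrite eqxx mul1r.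
by move=> i /negbTE io; apply: big1 => k _; rewrite io mul0r.
Qed.

Lemma om_addr (o : 'I_n) U V : V \subset low o ->
  om U (o |: V) = om U V + (-1) ^+ #|V| * \sum_i sgo i o * eps U i.
Proof.
move=> sV; rewrite /om.
transitivity (\sum_i \sum_k (sgo i k * eps U i * eps V k +
     (k == o)%:R * ((-1) ^+ #|V| * (sgo i o * eps U i)))).
  apply: eq_bigr => i _; apply: eq_bigr => k _; rewrite eps_add //.
  by case: (k =P o) => [->|_] /=; ring.
under eq_bigr => i _ do rewrite big_split /=.
rewrite big_split /=; congr (_ + _).
rewrite big_distrr /=; apply: eq_bigr => i _.
rewrite (bigD1 o) //= [X in _ + X]big1 ?addr0 ?eqxx ?mul1r //.
by move=> k /negbTE ->; rewrite mul0r.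
Qed.

Lemma sgo_sum_l (o : 'I_n) V : V \subset low o -> \sum_k sgo o k * eps V k = sig V.
Proof.
move=> sV; rewrite /sig; apply: eq_bigr => k _.
case: (boolP (k \in V)) => kV; last by rewrite eps_notin // mulr0.
have := subsetP sV k kV; rewrite inE /sgo => ko.
by rewrite ltnNge (ltnW ko) /= ko mul1r.
Qed.

Lemma sgo_sum_l2 (o : 'I_n) V : V \subset low o -> \sum_k sgo o k * eps (o |: V) k = sig V.
Proof.
move=> sV; under eq_bigr do rewrite eps_add // mulrDr.
rewrite big_split /= sgo_sum_l // (bigD1 o) //= big1 ?addr0.
  by rewrite /sgo ltnn mul0r addr0.
by move=> k /negbTE ->; rewrite mul0r mulr0.
Qed.

Lemma sgo_sum_r (o : 'I_n) U : U \subset low o -> \sum_i sgo i o * eps U i = - sig U.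
Proof.
move=> sU; rewrite /sig -sumrN; apply: eq_bigr => k _.
case: (boolP (k \in U)) => kU; last by rewrite eps_notin // mulr0 oppr0.
have := subsetP sU k kU; rewrite inE /sgo => ko.
by rewrite ko mulN1r.
Qed.

Definition tt (o : 'I_n) (k : int) : R := if podd k then gg o else hh o.
Definition sgz (k : int) : R := if podd k then -1 else 1.
Definition sd (k : int) : R := (podd k)%:R.

Lemma sign_card U : (-1) ^+ #|U| = sgz #|U|.
Proof. by rewrite /sgz /podd /= -signr_odd; case: (odd #|U|); rewrite ?expr0 ?expr1. Qed.

Lemma sig_card U : sig U = sd #|U|.
Proof. by rewrite sig_odd /sd /podd. Qed.

Lemma card_add_eq (o : 'I_n) U (p : int) : U \subset low o ->
  (#|o |: U|%:Z == p) = (#|U|%:Z == p - 1).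
Proof.
move=> sU; rewrite cardsU1 notin_low //=; apply/eqP/eqP => H.
  by rewrite -H PoszD addrAC subrr add0r.
by rewrite PoszD H addrC subrK.
Qed.

Lemma wt_add_eq (o : 'I_n) U (p : int) : U \subset low o -> #|U|%:Z = p ->
  wt (o |: U) = tt o p * wt U.
Proof. by move=> sU <-; rewrite wt_add. Qed.

Lemma Y_step (o : 'I_n) (p : int) : Y o.+1 p = Y o p + tt o (p - 1) * Y o (p - 1).
Proof.
rewrite {1}/Y (sum_split o (fun U => #|U|%:Z == p)); congr (_ + _).
rewrite /Y big_distrr /=; apply: eq_big => [U|U /andP[sU]].
  by case: (boolP (U \subset low o)) => //= sU; rewrite card_add_eq.
rewrite card_add_eq // => /eqP eU.
by rewrite (wt_add_eq sU eU).
Qed.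

Lemma dsum_eval (N : nat) (a b : int) (k1 k2 : R) :
  \sum_(U : {set 'I_n} | (U \subset low N) && (#|U|%:Z == a))
   \sum_(V : {set 'I_n} | (V \subset low N) && (#|V|%:Z == b))
     wt U * wt V * (om U V + k1 * sig V + k2 * sig U) =
  F N a b + (k1 * sd b + k2 * sd a) * (Y N a * Y N b).
Proof.
rewrite /F /Y big_distrl /= big_distrr -big_split /=; apply: eq_bigr => U /andP[_ /eqP eU].
rewrite sig_card eU !big_distrr -big_split /=; apply: eq_bigr => V /andP[_ /eqP eV].
rewrite sig_card eV; ring.
Qed.

Lemma F_step (o : 'I_n) (p q : int) : F o.+1 p q =
   (F o p q + tt o (q-1) * (F o p (q-1) + (0 * sd (q-1) + (- sgz (q-1)) * sd p) * (Y o p * Y o (q-1))))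
 + (tt o (p-1) * (F o (p-1) q + (sgz (p-1) * sd q + 0 * sd (p-1)) * (Y o (p-1) * Y o q))
 + tt o (p-1) * tt o (q-1) * (F o (p-1) (q-1) + (sgz (p-1) * sd (q-1) + (- sgz (q-1)) * sd (p-1)) * (Y o (p-1) * Y o (q-1)))).
Proof.
rewrite {1}/F (sum_split o (fun U => #|U|%:Z == p)).
have inner : forall U, \sum_(V : {set 'I_n} | (V \subset low o.+1) && (#|V|%:Z == q)) wt U * wt V * om U V =
   \sum_(V : {set 'I_n} | (V \subset low o) && (#|V|%:Z == q)) wt U * wt V * om U V +
   \sum_(V : {set 'I_n} | (V \subset low o) && (#|o |: V|%:Z == q)) wt U * wt (o |: V) * om U (o |: V).
  by move=> U; rewrite (sum_split o (fun V => #|V|%:Z == q)).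
under eq_bigr do rewrite inner.
rewrite big_split /=; congr (_ + _).
  congr (_ + _).
  rewrite -(dsum_eval o p (q-1) 0 (- sgz (q-1))) big_distrr /=.
  apply: eq_bigr => U /andP[sU /eqP eU]; rewrite big_distrr /=.
  apply: eq_big => [V|V /andP[sV]].
    by case: (boolP (V \subset low o)) => //= sV; rewrite card_add_eq.
  rewrite card_add_eq // => /eqP eV.
  rewrite (wt_add_eq sV eV) om_addr // sgo_sum_r // sign_card eV; ring.
under eq_bigr do rewrite inner.
rewrite big_split /=; congr (_ + _).
  rewrite -(dsum_eval o (p-1) q (sgz (p-1)) 0) big_distrr /=.
  apply: eq_big => [U|U /andP[sU]].
    by case: (boolP (U \subset low o)) => //= sU; rewrite card_add_eq.
  rewrite card_add_eq // => /eqP eU.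
  rewrite big_distrr /=; apply: eq_bigr => V /andP[sV /eqP eV].
  rewrite (wt_add_eq sU eU) om_addl // sgo_sum_l // sign_card eU; ring.
rewrite -(dsum_eval o (p-1) (q-1) (sgz (p-1)) (- sgz (q-1))) big_distrr /=.
apply: eq_big => [U|U /andP[sU]].
  by case: (boolP (U \subset low o)) => //= sU; rewrite card_add_eq.
rewrite card_add_eq // => /eqP eU.
rewrite big_distrr /=.
apply: eq_big => [V|V /andP[sV]].
  by case: (boolP (V \subset low o)) => //= sV; rewrite card_add_eq.
rewrite card_add_eq // => /eqP eV.
rewrite (wt_add_eq sU eU) (wt_add_eq sV eV) om_addl // sgo_sum_l2 // om_addr // sgo_sum_r //.
rewrite !sign_card eU eV; ring.
Qed.

Definition Rr (N : nat) (p q : int) : R :=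
  if podd p && ~~ podd q then Y N p * Y N (q-2) - Y N (p-1) * Y N (q-1)
  else if ~~ podd p && podd q then Y N (p-2) * Y N q - Y N (p-1) * Y N (q-1)
  else 0.

Lemma podd_sub2 (k : int) : podd (k - 2) = podd k.
Proof. have -> : k - 2 = k - 1 - 1 by lia. by rewrite !podd_sub1 negbK. Qed.

Lemma podd_sub3 (k : int) : podd (k - 3) = ~~ podd k.
Proof. have -> : k - 3 = k - 1 - 1 - 1 by lia. by rewrite !podd_sub1 negbK. Qed.

Lemma low0 U : (U \subset low 0) = (U == set0).
Proof.
apply/idP/eqP => [sU|->]; last exact: sub0set.
by apply/setP=> i; rewrite inE; apply/negP=> /(subsetP sU); rewrite inE.
Qed.

Lemma Y0 (p : int) : Y 0 p = (p == 0)%:R.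
Proof.
rewrite /Y; under eq_bigl do rewrite low0.
case: (boolP (p == 0)) => [/eqP ->|p0].
  rewrite (big_pred1 set0) ?cards0 /wt ?big_set0 // => U.
  by rewrite /=; case: (U =P set0) => [->|/eqP/negbTE UF]; rewrite ?cards0 ?UF.
rewrite big1 // => U /andP[/eqP -> /eqP e]; move: p0; by rewrite -e cards0 eqxx.
Qed.

Lemma F0 (p q : int) : F 0 p q = 0.
Proof.
rewrite /F; apply: big1 => U; rewrite low0 => /andP[/eqP -> _].
apply: big1 => V; rewrite low0 => /andP[/eqP -> _].
rewrite /om big1 ?mulr0 // => i _; apply: big1 => k _.
by rewrite eps_notin ?inE // mulr0 mul0r.
Qed.

Lemma E_inv (N : nat) : (N <= n)%N -> forall p q : int,
  F N p (q-2) - F N (p-2) q = Rr N p q.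
Proof.
elim: N => [_ p q|N IH hN p q].
  rewrite !F0 subrr /Rr !Y0.
  case: (boolP (podd p)) => pp; case: (boolP (podd q)) => pq //=.
    have -> : (p == 0) = false by apply/negbTE; apply: contraTN pp => /eqP ->.
    have -> : (q - 1 == 0) = false.
      by apply/negbTE; apply: contraTN pq; rewrite subr_eq0 => /eqP ->.
    by rewrite !mul0r mulr0 subrr.
  have -> : (q == 0) = false by apply/negbTE; apply: contraTN pq => /eqP ->.
  have -> : (p - 1 == 0) = false.
    by apply/negbTE; apply: contraTN pp; rewrite subr_eq0 => /eqP ->.
  by rewrite !mul0r mulr0 subrr.
have hN' : (N < n)%N by [].
have {}IH := IH (ltnW hN').
pose o := Ordinal hN'.
rewrite (_ : N = o) // in IH *.
have e1 : forall k : int, k - 2 - 1 = k - 3 by move=> k; lia.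
have e2 : forall k : int, k - 1 - 2 = k - 3 by move=> k; lia.
have e3 : forall k : int, k - 1 - 1 = k - 2 by move=> k; lia.
have h1 := IH p q; have h2 := IH p (q-1); have h3 := IH (p-1) q; have h4 := IH (p-1) (q-1).
rewrite ?e1 ?e2 ?e3 in h1 h2 h3 h4.
move/eqP: h1; rewrite subr_eq => /eqP h1.
move/eqP: h2; rewrite subr_eq => /eqP h2.
move/eqP: h3; rewrite subr_eq => /eqP h3.
move/eqP: h4; rewrite subr_eq => /eqP h4.
rewrite /Rr !F_step !Y_step ?e1 ?e2 ?e3 h1 h2 h3 h4 /Rr /tt /sgz /sd ?e1 ?e2 ?e3.
rewrite ?podd_sub1 ?podd_sub2 ?podd_sub3.
clearbody o.
case: (podd p); case: (podd q) => /=; ring.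
Qed.

Lemma F_neg (N : nat) (p q : int) : p < 0 -> F N p q = 0.
Proof.
move=> p0; rewrite /F big_pred0 // => U; apply/negbTE; apply/negP => /andP[_ /eqP e].
by move: p0; rewrite -e.
Qed.

Lemma podd_even (k : nat) : podd (2 * k)%N = false.
Proof. by change (odd (2 * k)%N = false); rewrite oddM. Qed.

Lemma F_even (N : nat) : (N <= n)%N -> forall a b : nat, F N (2 * a)%N (2 * b)%N = 0.
Proof.
move=> hN; elim=> [|a IH] b.
  have := E_inv hN 0 (2 * b.+1)%N.
  rewrite /Rr podd_even; rewrite /=.
  have -> : (2 * b.+1)%N%:Z - 2 = (2 * b)%N by lia.
  by rewrite (@F_neg N (0-2)) // subr0 muln0.

have := E_inv hN (2 * a.+1)%N (2 * b.+1)%N.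
rewrite /Rr !podd_even /=.
have -> : (2 * b.+1)%N%:Z - 2 = (2 * b)%N by lia.
have -> : (2 * a.+1)%N%:Z - 2 = (2 * a)%N by lia.
by rewrite IH => /eqP; rewrite subr_eq0 => /eqP.
Qed.

End Core.

From mathcomp Require Import all_classical all_reals all_analysis.
Import numFieldNormedType.Exports.

Section Analysis.
Variable R : realType.
Variable n : nat.
Variable m : 'I_n -> R.
Implicit Types U V : {set 'I_n}.

Definition W (x : 'I_n -> R) U : R :=
  wt (fun u => m u * expR (x u)) (fun u => m u * expR (- x u)) U.

Lemma Hj_U x j : Hj m j x = \sum_(U : {set 'I_n} | #|U| == (2 * j)%N) W x U.
Proof.
rewrite /Hj pair_big_dep /=.
rewrite (reindex_onto (fun U => (ev U, od U)) (fun p => p.1 :|: p.2)) /=; last first.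
  move=> [I J] /= /andP[/eqP cI /andP[/eqP cJ iIJ]].
  by case: (K2 cI cJ iIJ) => -> ->.
apply: eq_big => [U|U _].
  have -> : ev U :|: od U = U.
    by apply/setP => u; rewrite !inE; case: (odd _); rewrite ?andbT ?andbF ?orbF.
  rewrite eqxx andbT.
  apply/idP/eqP.
    case/andP=> /eqP ce /andP[/eqP co _].
    rewrite -(cardsID [set u | odd (rk U u)] U).
    have -> : U :&: [set u | odd (rk U u)] = od U by apply/setP=> u; rewrite !inE.
    have -> : U :\: [set u | odd (rk U u)] = ev U by apply/setP=> u; rewrite !inE andbC.
    by rewrite co ce addnn -mul2n.
  by move=> cU; case: (K1 cU) => -> -> ->; rewrite !eqxx.
rewrite /W /wt [RHS](bigID (fun u => odd (rk U u))) /= [RHS]mulrC; congr (_ * _).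
  apply: eq_big => [u|u]; first by rewrite !inE.
  by rewrite inE => /andP[_ hu]; rewrite (negbTE hu).
apply: eq_big => [u|u]; first by rewrite !inE.
by rewrite inE => /andP[_ hu]; rewrite hu.
Qed.

End Analysis.

Local Open Scope ring_scope.
Section Analysis2.
Variable R : realType.
Variable n : nat.
Variable m : 'I_n -> R.
Implicit Types U V : {set 'I_n}.

Lemma W_exp x U : W m x U = (\prod_(u in U) m u) * expR (\sum_i eps R U i * x i).
Proof.
have -> : \sum_i eps R U i * x i = \sum_(i in U) eps R U i * x i.
  rewrite (bigID (fun i => i \in U)) /= [X in _ + X]big1 ?addr0 // => i /eps_notin ->.
  by rewrite mul0r.
rewrite expR_sum -big_split /=; apply: eq_bigr => u uU.
rewrite /eps uU -signr_odd; case: (odd _); by rewrite ?expr1 ?expr0 ?mulN1r ?mul1r.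
Qed.

Lemma eps_upd x i t U : \sum_k eps R U k * (if k == i then t else x k) =
  \sum_k eps R U k * x k + eps R U i * (t - x i).
Proof.
rewrite (bigD1 i) //= [X in _ = X + _](bigD1 i) //= eqxx.
have -> : \sum_(k | k != i) eps R U k * (if k == i then t else x k) =
          \sum_(k | k != i) eps R U k * x k by apply: eq_bigr => k /negbTE ->.
ring.
Qed.

Lemma is_derive_affine (a L e : R) :
  is_derive a 1 (fun t : R => L + e * (t - a)) e.
Proof.
have -> : (fun t : R => L + e * (t - a)) = cst L + e \*: (@id R - cst a).
  by apply/funext => t.
apply: is_derive_eq.
by rewrite add0r subr0 /GRing.scale /= mulr1.
Qed.

Lemma is_derive_Cexp (a L e C : R) :
  is_derive a 1 (fun t : R => C * expR (L + e * (t - a))) (e * (C * expR L)).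
Proof.
have h := @is_derive1_comp R expR (fun t : R => L + e * (t - a)) a _ _ (is_derive_expR _) (is_derive_affine a L e).
have -> : (fun t : R => C * expR (L + e * (t - a))) =
   C \*: (expR \o (fun t : R => L + e * (t - a))) by apply/funext => t.
apply: (is_derive_eq (is_deriveZ C h)).
by rewrite subrr mulr0 addr0 /GRing.scale /=; ring.
Qed.

Lemma deriv_W (x : 'I_n -> R) (i : 'I_n) U :
  is_derive (x i) 1 (fun t => W m (fun k => if k == i then t else x k) U)
    (eps R U i * W m x U).
Proof.
have -> : (fun t => W m (fun k => if k == i then t else x k) U) =
   (fun t => (\prod_(u in U) m u) * expR (\sum_k eps R U k * x k + eps R U i * (t - x i))).
  by apply/funext => t; rewrite W_exp eps_upd.
by rewrite W_exp; apply: is_derive_Cexp.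
Qed.

Lemma is_derive_bsum (I : finType) (P : pred I) (f : I -> R -> R) (df : I -> R) (a : R) :
  (forall i, is_derive a 1 (f i) (df i)) ->
  is_derive a 1 (fun t => \sum_(i | P i) f i t) (\sum_(i | P i) df i).
Proof.
move=> H; rewrite unlock /=.
elim: (index_enum I) => [|j r IH] /=.
  have -> : (fun _ : R => (0 : R)) = cst 0 by [].
  exact: is_derive_cst.
case: (P j) => //.
have -> : (fun t => f j t + foldr (fun i acc => if P i then f i t + acc else acc) 0 r) =
  f j + (fun t => foldr (fun i acc => if P i then f i t + acc else acc) 0 r) by [].
exact: is_deriveD.
Qed.

Lemma partial_Hj (x : 'I_n -> R) (i : 'I_n) j : partial i (Hj m j) x =
  \sum_(U : {set 'I_n} | #|U| == (2 * j)%N) eps R U i * W m x U.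
Proof.
rewrite /partial derive1E.
have -> : (fun t => Hj m j (fun k => if k == i then t else x k)) =
  (fun t => \sum_(U : {set 'I_n} | #|U| == (2 * j)%N) W m (fun k => if k == i then t else x k) U).
  by apply/funext => t; rewrite Hj_U.
apply: derive_val; apply: is_derive_bsum => U; exact: deriv_W.
Qed.

Lemma sg_sgo (x : 'I_n -> R) (hx : forall i k : 'I_n, (i < k)%N -> x i < x k) (i k : 'I_n) :
  Num.sg (x i - x k) = sgo R i k.
Proof.
rewrite /sgo; case: ltngtP => h.
- by apply: ltr0_sg; rewrite subr_lt0; exact: hx.
- by apply: gtr0_sg; rewrite subr_gt0; exact: hx.
- by rewrite (val_inj h) subrr sgr0.
Qed.

Lemma bracket_sum (x : 'I_n -> R) (hx : forall i k : 'I_n, (i < k)%N -> x i < x k) (a b : nat) :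
  pbracket (Hj m a) (Hj m b) x =
  \sum_(U : {set 'I_n} | #|U| == (2 * a)%N) \sum_(V : {set 'I_n} | #|V| == (2 * b)%N)
     W m x U * W m x V * om R U V.
Proof.
rewrite /pbracket.
transitivity (\sum_i \sum_k \sum_(U : {set 'I_n} | #|U| == (2 * a)%N)
   \sum_(V : {set 'I_n} | #|V| == (2 * b)%N)
     sgo R i k * (eps R U i * W m x U) * (eps R V k * W m x V)).
  apply: eq_bigr => i _; apply: eq_bigr => k _.
  rewrite sg_sgo // !partial_Hj -mulrA big_distrlr big_distrr /=.
  by apply: eq_bigr => U _; rewrite big_distrr /=; apply: eq_bigr => V _; rewrite mulrA.
under eq_bigr => i _ do rewrite exchange_big.
rewrite exchange_big.
under eq_bigr => U _ do under eq_bigr => i _ do rewrite exchange_big.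
under eq_bigr => U _ do rewrite exchange_big.
apply: eq_bigr => U _; apply: eq_bigr => V _.
rewrite /om big_distrr /=; apply: eq_bigr => i _.
rewrite big_distrr /=; apply: eq_bigr => k _; ring.
Qed.

Lemma low_all (U : {set 'I_n}) : U \subset low n n.
Proof. by apply/fintype.subsetP => i _; rewrite inE ltn_ord. Qed.

Lemma main_gen (x : 'I_n -> R) (hx : forall i k : 'I_n, (i < k)%N -> x i < x k) (a b : nat) :
  pbracket (Hj m a) (Hj m b) x = 0.
Proof.
rewrite bracket_sum //.
transitivity (F (fun u => m u * expR (x u)) (fun u => m u * expR (- x u)) n (2 * a)%N (2 * b)%N);
  last exact: F_even.
rewrite /F; apply: eq_big => [U|U _]; first by rewrite low_all.
apply: eq_big => [V|V _]; first by rewrite low_all.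
by [].
Qed.

End Analysis2.

Unset Implicit Arguments.

Theorem theorem4 (R : realType) (K : nat) (m : 'I_(2 * K) -> R)
    (hm : forall i, 0 < m i)
    (x : 'I_(2 * K) -> R)
    (hx : forall i k : 'I_(2 * K), (i < k)%N -> x i < x k)
    (a b : nat) (ha : (1 <= a <= K)%N) (hb : (1 <= b <= K)%N) :
  pbracket (Hj m a) (Hj m b) x = 0.
Proof. exact: (main_gen m hx a b). Qed.
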